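(* Let $\kappa>0$, $u_0>0$, and let $u$ be the solution of $\frac{d}{dr}\big(u'/\sqrt{1+u'^2}\big)=\kappa u$, $u(0)=u_0$, $u'(0)=0$. Let $a>0$ and $0\le\gamma<\pi/2$ be such that $u$ is defined on $[0,a)$ and meets the vertical wall $r=a$ with contact angle $\gamma$, i.e. $\sin\psi(a)=\cos\gamma$, where $\sin\psi=u'/\sqrt{1+u'^2}$ (extended continuously to $r=a$). Then $q=u(a)-u(0)$ satisfies $$\frac1{\kappa u_0}\Big(1-\sqrt{1-a^2\kappa^2u_0^2}\Big)<q<\frac a{\cos\gamma}(1-\sin\gamma)$$ and $$q>\frac{2a(1-\sin\gamma)}{1+\sqrt{1+2\kappa a^2(1-\sin\gamma)}}.$$
   Context: $u$ is the profile of a $\kappa$-cylindrical capillary surface $z=u(x)$ between vertical plates $x=\pm a$; $\psi$ denotes the inclination angle of the graph. *)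

(* Defs.v *)
From Stdlib Require Import Reals.
From Coquelicot Require Import Coquelicot.
Open Scope R_scope.

(* sin psi, where psi is the inclination angle of the graph z = u(r):
   sin psi = u' / sqrt(1 + u'^2). *)
Definition sin_psi (du : R -> R) (r : R) : R := du r / sqrt (1 + du r ^ 2).

Definition capillary_solution (kappa u0 a : R) (u du : R -> R) : Prop :=
  (forall r, 0 <= r < a -> is_derive u r (du r)) /\
  (forall r, 0 <= r < a -> is_derive (sin_psi du) r (kappa * u r)) /\
  u 0 = u0 /\ du 0 = 0.

(* Main.v *)
Require Import Defs.
From Stdlib Require Import Reals Lra Psatz.
From Coquelicot Require Import Coquelicot.
Open Scope R_scope.

Lemma derive_cont f x l : is_derive f x l -> continuity_pt f x.
Proof.
  intro H. apply continuity_pt_filterlim. apply (ex_derive_continuous (K:=R_AbsRing) (V:=R_NormedModule)).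
  exists l; exact H.
Qed.

Lemma mono_weak_step f df x m : x < m ->
  (forall r, x <= r <= m -> is_derive f r (df r)) ->
  exists c, x <= c <= m /\ f m - f x = df c * (m - x).
Proof.
  intros Hxm Hd.
  destruct (MVT_gen f x m df) as [c [Hc Heq]].
  - intros y Hy. rewrite Rmin_left in Hy by lra. rewrite Rmax_right in Hy by lra.
    apply Hd; lra.
  - intros y Hy. rewrite Rmin_left in Hy by lra. rewrite Rmax_right in Hy by lra.
    apply derive_cont with (df y). apply Hd; lra.
  - rewrite Rmin_left in Hc by lra. rewrite Rmax_right in Hc by lra.
    exists c; split; auto.
Qed.

Lemma mono_strict f df lo hi :
  (forall r, lo <= r < hi -> is_derive f r (df r)) ->
  (forall r, lo <= r < hi -> 0 <= df r) ->
  (forall r, lo < r < hi -> 0 < df r) ->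
  forall x y, lo <= x -> x < y -> y < hi -> f x < f y.
Proof.
  intros Hd H0 H1 x y Hx Hxy Hy.
  set (m := (x + y) / 2).
  destruct (mono_weak_step f df x m) as [c [Hc Hc']]; [unfold m; lra| |].
  { intros r Hr. apply Hd. unfold m in Hr; lra. }
  destruct (mono_weak_step f df m y) as [c2 [Hc2 Hc2']]; [unfold m; lra| |].
  { intros r Hr. apply Hd. unfold m in Hr; lra. }
  assert (0 <= df c) by (apply H0; unfold m in Hc; lra).
  assert (0 < df c2) by (apply H1; unfold m in Hc2; lra).
  assert (0 < m - x) by (unfold m; lra).
  assert (0 < y - m) by (unfold m; lra).
  nra.
Qed.

Lemma const_deriv f lo hi :
  (forall r, lo <= r < hi -> is_derive f r 0) ->
  forall r, lo <= r < hi -> f r = f lo.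
Proof.
  intros Hd r Hr.
  destruct (Req_dec r lo) as [->|Hne]; [reflexivity|].
  destruct (mono_weak_step f (fun _ => 0) lo r) as [c [Hc Hc']]; [lra| |].
  { intros y Hy. apply Hd. lra. }
  lra.
Qed.

Lemma lim_le f g a b l m :
  filterlim f (at_left a) (locally l) ->
  filterlim g (at_left a) (locally m) -> b < a ->
  (forall r, b < r < a -> f r <= g r) -> l <= m.
Proof.
  intros Hf Hg Hb H.
  assert (HH := filterlim_le (F := at_left a) f g l m).
  simpl in HH. apply HH; auto.
  exists (mkposreal (a - b) ltac:(lra)).
  intros y Hy Hya. apply H. split; [|lra].
  unfold ball in Hy; simpl in Hy; unfold AbsRing_ball, abs, minus, plus, opp in Hy; simpl in Hy.
  apply Rabs_def2 in Hy. lra.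
Qed.

Lemma cont_left (h : R -> R) (a : R) : ex_derive h a -> filterlim h (at_left a) (locally (h a)).
Proof.
  intro H. eapply filterlim_filter_le_1.
  - apply filter_le_within.
  - apply (ex_derive_continuous (K:=R_AbsRing) (V:=R_NormedModule)). exact H.
Qed.

Definition T (t : R) := t / sqrt (1 - t ^ 2).

Lemma T_mono x y : 0 <= x -> x < y -> y < 1 -> T x < T y.
Proof.
  intros Hx Hxy Hy. unfold T.
  assert (Hsy : 0 < sqrt (1 - y ^ 2)) by (apply sqrt_lt_R0; nra).
  assert (Hsx : 0 < sqrt (1 - x ^ 2)) by (apply sqrt_lt_R0; nra).
  assert (Hle : sqrt (1 - y ^ 2) <= sqrt (1 - x ^ 2)) by (apply sqrt_le_1_alt; nra).
  apply Rmult_lt_reg_r with (sqrt (1 - y ^ 2) * sqrt (1 - x ^ 2)).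
  - nra.
  - field_simplify; try lra. nra.
Qed.

Lemma T_mono_w x y : 0 <= x -> x <= y -> y < 1 -> T x <= T y.
Proof.
  intros. destruct (Req_dec x y) as [->|]; [lra|]. left; apply T_mono; lra.
Qed.

Lemma sp_bounds d : -1 < d / sqrt (1 + d ^ 2) < 1.
Proof.
  assert (HS : 0 < sqrt (1 + d ^ 2)) by (apply sqrt_lt_R0; nra).
  assert (HS2 : sqrt (1 + d ^ 2) * sqrt (1 + d ^ 2) = 1 + d ^ 2) by (apply sqrt_sqrt; nra).
  set (S := sqrt (1 + d ^ 2)) in *.
  assert (Habs : d < S /\ - S < d) by (split; nra).
  split.
  - apply Rmult_lt_reg_r with S; auto. field_simplify; lra.
  - apply Rmult_lt_reg_r with S; auto. field_simplify; lra.
Qed.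

Lemma sp_inv d : d = T (d / sqrt (1 + d ^ 2)).
Proof.
  assert (HS : 0 < sqrt (1 + d ^ 2)) by (apply sqrt_lt_R0; nra).
  assert (HS2 : sqrt (1 + d ^ 2) * sqrt (1 + d ^ 2) = 1 + d ^ 2) by (apply sqrt_sqrt; nra).
  set (S := sqrt (1 + d ^ 2)) in *.
  unfold T.
  assert (E : 1 - (d / S) ^ 2 = (1 / S) * (1 / S)).
  { field_simplify; try lra. replace (S ^ 2) with (1 + d ^ 2) by (simpl; lra).
    f_equal. ring. }
  rewrite E, sqrt_square.
  - field. lra.
  - apply Rlt_le, Rdiv_lt_0_compat; lra.
Qed.

Theorem mainTheorem9 (kappa u0 a gamma : R) (u du : R -> R) :
  0 < kappa -> 0 < u0 -> 0 < a -> 0 <= gamma < PI / 2 ->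
  capillary_solution kappa u0 a u du ->
  filterlim u (at_left a) (locally (u a)) ->
  filterlim (sin_psi du) (at_left a) (locally (cos gamma)) ->
  let q := u a - u 0 in
  (1 / (kappa * u0) * (1 - sqrt (1 - a ^ 2 * kappa ^ 2 * u0 ^ 2)) < q /\
   q < a / cos gamma * (1 - sin gamma)) /\
  q > 2 * a * (1 - sin gamma) /
        (1 + sqrt (1 + 2 * kappa * a ^ 2 * (1 - sin gamma))).
Proof.
  intros Hk Hu0 Ha Hg [Hdu [Hds [Hu00 Hdu0]]] Hlu Hls q.
  unfold q; clear q. rewrite Hu00.
  set (s := sin_psi du) in *.
  set (c := cos gamma) in *.
  assert (Hc0 : 0 < c) by (apply cos_gt_0; lra).
  assert (Hc1 : c <= 1) by (apply COS_bound).
  assert (Hsg : 0 <= sin gamma) by (apply sin_ge_0; lra).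
  assert (Hsc : sqrt (1 - c ^ 2) = sin gamma).
  { unfold c. replace (1 - cos gamma ^ 2) with (sin gamma ^ 2).
    - apply sqrt_pow2; lra.
    - pose proof (sin2_cos2 gamma). unfold Rsqr in *. simpl. lra. }
  assert (Hsb : forall r, -1 < s r < 1) by (intro r; apply sp_bounds).
  assert (HdT : forall r, du r = T (s r)) by (intro r; apply sp_inv).
  assert (HC : forall r, 0 < 1 - s r ^ 2) by (intro r; specialize (Hsb r); nra).
  assert (Hs0 : s 0 = 0).
  { unfold s, sin_psi. rewrite Hdu0. unfold Rdiv. ring. }
  set (E0 := 1 + kappa * u0 ^ 2 / 2).
  assert (HE : forall r, 0 <= r < a -> sqrt (1 - s r ^ 2) + kappa * u r ^ 2 / 2 = E0).
  { assert (HD : forall r, 0 <= r < a -> is_derive (fun r => sqrt (1 - s r ^ 2) + kappa * u r ^ 2 / 2) r 0).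
    { intros r Hr.
      pose proof (Hds r Hr) as H1; pose proof (Hdu r Hr) as H2.
      auto_derive.
      - repeat split. exists (kappa * u r); exact H1. specialize (HC r); lra. exists (du r); exact H2.
      - replace (Derive (fun x => s x) r) with (kappa * u r) by (symmetry; apply is_derive_unique; exact H1).
        replace (Derive (fun x => u x) r) with (du r) by (symmetry; apply is_derive_unique; exact H2).
        rewrite HdT; unfold T.
        replace (1 + - (s r * (s r * 1))) with (1 - s r ^ 2) by ring.
        assert (0 < sqrt (1 - s r ^ 2)) by (apply sqrt_lt_R0; apply HC).
        field; lra. }
    intros r Hr.
    rewrite (const_deriv _ 0 a HD r Hr).
    rewrite Hs0, Hu00. unfold E0. replace (1 - 0 ^ 2) with 1 by ring. rewrite sqrt_1. ring. }
  assert (Hsq : forall r, 0 <= r < a -> u0 ^ 2 <= u r ^ 2).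
  { intros r Hr. specialize (HE r Hr).
    assert (sqrt (1 - s r ^ 2) <= sqrt 1) by (apply sqrt_le_1_alt; nra).
    rewrite sqrt_1 in *. unfold E0 in HE.
    apply Rmult_le_reg_l with kappa; lra. }
  assert (Hpos : forall r, 0 <= r < a -> 0 < u r).
  { intros r Hr.
    destruct (Rlt_or_le 0 (u r)) as [|Hle]; [assumption|exfalso].
    destruct (Req_dec (u r) 0) as [Heq|Hne].
    { specialize (Hsq r Hr). rewrite Heq in Hsq. nra. }
    destruct (Req_dec r 0) as [->|Hr0]; [lra|].
    destruct (Ranalysis5.IVT_interv (fun t => - u t) 0 r) as [z [Hz Hz']].
    - intros t Ht. apply derive_cont with (- du t).
      apply (is_derive_opp u t (du t)). apply Hdu; lra.
    - lra.
    - lra.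
    - lra.
    - specialize (Hsq z ltac:(lra)). assert (u z = 0) by lra. rewrite H in Hsq. nra. }
  assert (Hge : forall r, 0 <= r < a -> u0 <= u r).
  { intros r Hr. specialize (Hsq r Hr). specialize (Hpos r Hr). nra. }
  assert (Hspos : forall r, 0 < r < a -> 0 < s r).
  { intros r Hr. rewrite <- Hs0.
    apply (mono_strict s (fun r => kappa * u r) 0 a Hds); try lra.
    - intros t Ht. specialize (Hpos t Ht). nra.
    - intros t Ht. assert (0 < u t) by (apply Hpos; lra). nra. }
  assert (Hdupos : forall r, 0 < r < a -> 0 < du r).
  { intros r Hr. rewrite HdT. unfold T. apply Rdiv_lt_0_compat; [apply Hspos; lra|].
    apply sqrt_lt_R0, HC. }
  assert (Hugt : forall r, 0 < r < a -> u0 < u r).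
  { intros r Hr. rewrite <- Hu00.
    apply (mono_strict u du 0 a Hdu); try lra.
    - intros t Ht. destruct (Req_dec t 0) as [->|]; [lra|]. left; apply Hdupos; lra.
    - exact Hdupos. }
  set (K := kappa * u0).
  assert (Hm1 : forall x y, 0 <= x -> x < y -> y < a -> s x - K * x < s y - K * y).
  { intros x y Hx Hxy Hy.
    assert (HH : (fun t => s t - K * t) x < (fun t => s t - K * t) y).
    { apply (mono_strict (fun t => s t - K * t) (fun t => kappa * u t - K) 0 a); try lra.
      - intros t Ht. pose proof (Hds t Ht) as H1.
        auto_derive; [exists (kappa * u t); exact H1|].
        replace (Derive (fun x => s x) t) with (kappa * u t) by (symmetry; apply is_derive_unique; exact H1).
        ring.
      - intros t Ht. specialize (Hge t Ht). unfold K. nra.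
      - intros t Ht. specialize (Hugt t Ht). unfold K. nra. }
    exact HH. }
  assert (HsK : forall r, 0 < r < a -> K * r < s r).
  { intros r Hr. specialize (Hm1 0 r ltac:(lra) ltac:(lra) ltac:(lra)). rewrite Hs0 in Hm1. lra. }
  assert (HKa : K * a < c).
  { set (d1 := s (a / 2) - K * (a / 2)).
    assert (Hd1 : 0 < d1) by (unfold d1; specialize (HsK (a/2) ltac:(lra)); lra).
    assert (HL := lim_le (fun r => d1 + K * r) s a (a / 2) (d1 + K * a) c).
    apply (fun H => Rlt_le_trans _ (d1 + K * a) _ H); [lra|].
    apply HL; auto; [|lra|].
    - apply (cont_left (fun r => d1 + K * r) a). auto_derive. auto.
    - intros r Hr. specialize (Hm1 (a/2) r ltac:(lra) ltac:(lra) ltac:(lra)). fold d1 in Hm1. lra. }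
  assert (Bound1 : 1 / (kappa * u0) * (1 - sqrt (1 - a ^ 2 * kappa ^ 2 * u0 ^ 2)) < u a - u0).
  { set (L := fun r => 1 / (kappa * u0) * (1 - sqrt (1 - r ^ 2 * kappa ^ 2 * u0 ^ 2))).
    assert (HLd : forall r, 0 <= r <= a -> is_derive L r (T (K * r))).
    { intros r Hr.
      assert (HK0 : 0 < K) by (unfold K; nra).
      assert (HKr : 0 <= K * r < 1) by (split; nra).
      unfold L. auto_derive.
      - replace (1 + - (r * (r * 1) * (kappa * (kappa * 1)) * (u0 * (u0 * 1)))) with (1 - (K * r) ^ 2)
          by (unfold K; ring). nra.
      - replace (1 + - (r * (r * 1) * (kappa * (kappa * 1)) * (u0 * (u0 * 1)))) with (1 - (K * r) ^ 2)
          by (unfold K; ring).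
        unfold T. assert (0 < sqrt (1 - (K * r) ^ 2)) by (apply sqrt_lt_R0; nra).
        unfold K in *. field. repeat split; lra. }
    assert (HK0 : 0 < K) by (unfold K; nra).
    set (g := fun r => u r - L r).
    assert (Hgm : forall x y, 0 <= x -> x < y -> y < a -> g x < g y).
    { apply (mono_strict g (fun r => du r - T (K * r)) 0 a).
      - intros r Hr. unfold g. apply (is_derive_minus u L r (du r) (T (K * r))).
        apply Hdu; auto. apply HLd; lra.
      - intros r Hr. rewrite HdT.
        destruct (Req_dec r 0) as [->|Hr0].
        + rewrite Hs0, Rmult_0_r. lra.
        + specialize (HsK r ltac:(lra)). specialize (Hsb r).
          assert (T (K * r) <= T (s r)) by (apply T_mono_w; nra). lra.
      - intros r Hr. rewrite HdT.
        specialize (HsK r ltac:(lra)). specialize (Hsb r).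
        assert (T (K * r) < T (s r)) by (apply T_mono; nra). lra. }
    assert (Hg0 : g 0 = u0).
    { unfold g, L. rewrite Hu00. replace (1 - 0 ^ 2 * kappa ^ 2 * u0 ^ 2) with 1 by ring.
      rewrite sqrt_1. ring. }
    assert (Hga : u0 < g (a / 2)) by (rewrite <- Hg0; apply Hgm; lra).
    assert (HL := lim_le (fun r => g (a / 2) + L r) u a (a / 2) (g (a / 2) + L a) (u a)).
    assert (g (a / 2) + L a <= u a).
    { apply HL; auto; [|lra|].
      - apply (cont_left (fun r => g (a / 2) + L r) a).
        apply (ex_derive_plus (fun _ => g (a / 2)) L).
        apply ex_derive_const. exists (T (K * a)). apply HLd; lra.
      - intros r Hr. assert (Hgr : g (a / 2) < g r) by (apply Hgm; lra). unfold g in *. lra. }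
    unfold L in H. lra. }
  assert (Hsc_r : forall r, 0 < r < a -> s r < c * r / a).
  { assert (Hphi : forall r, 0 < r < a -> s r < r * (kappa * u r)).
    { intros r Hr.
      assert (HH : (fun t => t * (kappa * u t) - s t) 0 < (fun t => t * (kappa * u t) - s t) r).
      { apply (mono_strict (fun t => t * (kappa * u t) - s t) (fun t => t * (kappa * du t)) 0 a); try lra.
        - intros t Ht. pose proof (Hds t Ht) as H1; pose proof (Hdu t Ht) as H2.
          auto_derive; [repeat split; [exists (du t); exact H2 | exists (kappa * u t); exact H1]|].
          replace (Derive (fun x => s x) t) with (kappa * u t) by (symmetry; apply is_derive_unique; exact H1).
          replace (Derive (fun x => u x) t) with (du t) by (symmetry; apply is_derive_unique; exact H2).
          ring.
        - intros t Ht. destruct (Req_dec t 0) as [->|]; [lra|].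
          specialize (Hdupos t ltac:(lra)). apply Rmult_le_pos; nra.
        - intros t Ht. specialize (Hdupos t Ht). apply Rmult_lt_0_compat; nra. }
      cbv beta in HH. rewrite Hs0 in HH. lra. }
    set (h := fun t => s t / t).
    assert (Hh : forall x y, 0 < x -> x < y -> y < a -> h x < h y).
    { intros x y Hx Hxy Hy.
      apply (mono_strict h (fun t => (t * (kappa * u t) - s t) / t ^ 2) x a); try lra.
      - intros t Ht. pose proof (Hds t ltac:(lra)) as H1.
        unfold h. auto_derive; [repeat split; [exists (kappa * u t); exact H1 | lra]|].
        replace (Derive (fun x => s x) t) with (kappa * u t) by (symmetry; apply is_derive_unique; exact H1).
        field. lra.
      - intros t Ht. specialize (Hphi t ltac:(lra)).
        apply Rlt_le, Rdiv_lt_0_compat; [lra|]. apply pow_lt; lra.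
      - intros t Ht. specialize (Hphi t ltac:(lra)).
        apply Rdiv_lt_0_compat; [lra|]. apply pow_lt; lra. }
    intros r Hr.
    set (r' := (r + a) / 2).
    assert (Hlim : a * h r' <= c).
    { apply (lim_le (fun t => t * h r') s a r'); auto; [| unfold r'; lra |].
      - apply (cont_left (fun t => t * h r') a). auto_derive. auto.
      - intros t Ht. assert (h r' < h t) by (apply Hh; unfold r' in *; lra).
        assert (Hst : t * h t = s t) by (unfold h; field; unfold r' in Ht; lra). rewrite <- Hst.
        cbv beta. unfold r' in *. apply Rmult_le_compat_l; lra. }
    assert (Hhr : h r < h r') by (apply Hh; unfold r'; lra).
    replace (s r) with (r * h r) by (unfold h; field; lra).
    apply (Rmult_lt_reg_r a); [lra|]. replace (c * r / a * a) with (c * r) by (field; lra).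
    assert (0 < r * a * (h r' - h r)) by (apply Rmult_lt_0_compat; [apply Rmult_lt_0_compat|]; lra).
    assert (0 <= r * (c - a * h r')) by (apply Rmult_le_pos; lra).
    nra. }
  assert (Bound2 : u a - u0 < a / c * (1 - sin gamma)).
  { set (M := fun r => a / c * (1 - sqrt (1 - (c * r / a) ^ 2))).
    assert (Hcr : forall r, 0 <= r < a -> 0 <= c * r / a < 1).
    { intros r Hr. split.
      - apply Rmult_le_pos; [nra|]. apply Rlt_le, Rinv_0_lt_compat; lra.
      - apply (Rmult_lt_reg_r a); [lra|]. replace (c * r / a * a) with (c * r) by (field; lra). nra. }
    assert (HMd : forall r, 0 <= r < a -> is_derive M r (T (c * r / a))).
    { intros r Hr. specialize (Hcr r Hr).
      unfold M. auto_derive.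
      - replace (1 + - (c * r * / a * (c * r * / a * 1))) with (1 - (c * r / a) ^ 2) by (unfold Rdiv; ring). nra.
      - replace (1 + - (c * r * / a * (c * r * / a * 1))) with (1 - (c * r / a) ^ 2) by (unfold Rdiv; ring).
        unfold T. assert (0 < sqrt (1 - (c * r / a) ^ 2)) by (apply sqrt_lt_R0; nra).
        field. repeat split; lra. }
    set (g2 := fun r => M r - u r).
    assert (Hgm : forall x y, 0 <= x -> x < y -> y < a -> g2 x < g2 y).
    { apply (mono_strict g2 (fun r => T (c * r / a) - du r) 0 a).
      - intros r Hr. unfold g2. apply (is_derive_minus M u r (T (c * r / a)) (du r)).
        apply HMd; auto. apply Hdu; auto.
      - intros r Hr. rewrite HdT. specialize (Hcr r Hr).
        destruct (Req_dec r 0) as [->|Hr0].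
        + rewrite Hs0. replace (c * 0 / a) with 0 by (field; lra). lra.
        + specialize (Hsc_r r ltac:(lra)). specialize (Hspos r ltac:(lra)).
          assert (T (s r) <= T (c * r / a)) by (apply T_mono_w; lra). lra.
      - intros r Hr. rewrite HdT. specialize (Hcr r ltac:(lra)).
        specialize (Hsc_r r Hr). specialize (Hspos r Hr).
        assert (T (s r) < T (c * r / a)) by (apply T_mono; lra). lra. }
    assert (Hg0 : g2 0 = - u0).
    { unfold g2, M. rewrite Hu00. replace (1 - (c * 0 / a) ^ 2) with 1 by (field; lra).
      rewrite sqrt_1. ring. }
    assert (Hga : - u0 < g2 (a / 2)) by (rewrite <- Hg0; apply Hgm; lra).
    assert (Hua : u a <= a / c * (1 - sin gamma) - g2 (a / 2)).
    { apply (lim_le u (fun _ => a / c * (1 - sin gamma) - g2 (a / 2)) a (a / 2)); auto; [|lra|].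
      - apply (cont_left (fun _ => a / c * (1 - sin gamma) - g2 (a / 2)) a). apply ex_derive_const.
      - intros t Ht. assert (Hgt : g2 (a / 2) < g2 t) by (apply Hgm; lra).
        assert (HMt : M t <= a / c * (1 - sin gamma)).
        { unfold M. specialize (Hcr t ltac:(lra)).
          assert (sqrt (1 - c ^ 2) <= sqrt (1 - (c * t / a) ^ 2)).
          { apply sqrt_le_1_alt.
            assert (c * t / a <= c).
            { apply (Rmult_le_reg_r a); [lra|]. replace (c * t / a * a) with (c * t) by (field; lra). nra. }
            nra. }
          rewrite Hsc in H.
          apply Rmult_le_compat_l; [apply Rlt_le, Rdiv_lt_0_compat; lra|]. lra. }
        unfold g2 in *. lra. }
    lra. }
  assert (Hen : sin gamma + kappa * u a ^ 2 / 2 = E0).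
  { assert (HA : filterlim (fun r => sqrt (1 - s r ^ 2)) (at_left a) (locally (sqrt (1 - c ^ 2)))).
    { apply (filterlim_comp _ _ _ s (fun x => sqrt (1 - x ^ 2)) _ _ _ Hls).
      apply (continuous_sqrt_comp (fun x => 1 - x ^ 2) c).
      apply (ex_derive_continuous (K:=R_AbsRing) (V:=R_NormedModule)). auto_derive. auto. }
    assert (HB : filterlim (fun r => kappa * u r ^ 2 / 2) (at_left a) (locally (kappa * u a ^ 2 / 2))).
    { apply (filterlim_comp _ _ _ u (fun x => kappa * x ^ 2 / 2) _ _ _ Hlu).
      apply (ex_derive_continuous (K:=R_AbsRing) (V:=R_NormedModule) (fun x => kappa * x ^ 2 / 2)).
      auto_derive. auto. }
    assert (HS : filterlim (fun r => sqrt (1 - s r ^ 2) + kappa * u r ^ 2 / 2) (at_left a)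
                   (locally (sqrt (1 - c ^ 2) + kappa * u a ^ 2 / 2))).
    { apply (filterlim_comp_2 _ _ Rplus HA HB).
      apply (filterlim_plus (V:=R_NormedModule)). }
    rewrite Hsc in HS.
    assert (HC0 : filterlim (fun _ : R => E0) (at_left a) (locally E0)).
    { apply (cont_left (fun _ => E0) a). apply ex_derive_const. }
    assert (H1 := lim_le _ _ a 0 _ _ HS HC0 Ha).
    assert (H2 := lim_le _ _ a 0 _ _ HC0 HS Ha).
    cut (sin gamma + kappa * u a ^ 2 / 2 <= E0 /\ E0 <= sin gamma + kappa * u a ^ 2 / 2); [lra|].
    split; [apply H1 | apply H2]; intros r Hr; rewrite HE; lra. }
  split; [split; assumption|].
  assert (Hq0 : 0 < u a - u0).
  { eapply Rle_lt_trans; [|exact Bound1].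
    apply Rmult_le_pos.
    - apply Rlt_le, Rdiv_lt_0_compat; [lra|]. apply Rmult_lt_0_compat; lra.
    - assert (sqrt (1 - a ^ 2 * kappa ^ 2 * u0 ^ 2) <= sqrt 1) by (apply sqrt_le_1_alt; nra). rewrite sqrt_1 in *. lra. }
  set (B := 1 - sin gamma) in *.
  set (qq := u a - u0) in *.
  assert (HB : B = kappa * qq * (2 * u0 + qq) / 2) by (unfold B, qq; unfold E0 in Hen; lra).
  assert (HBp : 0 < B) by (rewrite HB; apply Rdiv_lt_0_compat; [|lra];
    apply Rmult_lt_0_compat; [apply Rmult_lt_0_compat|]; lra).
  assert (HKa1 : kappa * u0 * a < 1) by (unfold K in HKa; lra).
  set (S := sqrt (1 + 2 * kappa * a ^ 2 * B)).
  assert (HS0 : 0 <= S) by apply sqrt_pos.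
  assert (HS2 : S * S = 1 + 2 * kappa * a ^ 2 * B).
  { apply sqrt_sqrt. apply Rlt_le. apply Rplus_lt_0_compat; [lra|].
    repeat apply Rmult_lt_0_compat; try lra. all: simpl; nra. }
  assert (HX : S * S < (kappa * a * qq + 1) * (kappa * a * qq + 1)).
  { rewrite HS2, HB. 
    assert (0 < kappa * a * qq * (1 - kappa * u0 * a)).
    { apply Rmult_lt_0_compat; [|lra]. repeat apply Rmult_lt_0_compat; lra. }
    simpl. nra. }
  assert (HX2 : S < kappa * a * qq + 1).
  { assert (0 < kappa * a * qq) by (repeat apply Rmult_lt_0_compat; lra). nra. }
  apply Rlt_gt.
  apply (Rmult_lt_reg_r (1 + S)); [lra|].
  unfold Rdiv. rewrite Rmult_assoc, Rinv_l, Rmult_1_r by lra.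
  apply (Rmult_lt_reg_l (kappa * a)); [nra|].
  replace (kappa * a * (2 * a * B)) with (S * S - 1) by (rewrite HS2; simpl; ring).
  nra.
Qed.
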